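(* Let $C\in\mathbb{R}^{N\times N}$ be a symmetric positive definite matrix, and let $\{1,\dots,N\}=\mathcal S\cup\mathcal S'$ be a partition into disjoint nonempty sets, with block decomposition $C=\begin{bmatrix} C_{\mathcal S} & C_{\mathcal S\mathcal S'}\\ C_{\mathcal S'\mathcal S} & C_{\mathcal S'}\end{bmatrix}$, where $C_{\mathcal S},C_{\mathcal S'}\succ 0$. For $\lambda>0$ define \[ R_{\mathcal S}(\lambda):=(C_{\mathcal S}+\lambda I)^{-1}-\big[(C+\lambda I)^{-1}\big]_{\mathcal S}, \] where $[M]_{\mathcal S}$ denotes the principal submatrix of $M$ indexed by $\mathcal S$. Define \[ \theta:=\frac{\|C_{\mathcal S\mathcal S'}\|^2}{\lambda_{\min}(C_{\mathcal S})\,\lambda_{\min}(C_{\mathcal S'})}. \] If $\theta<1$, then for all $\lambda>0$, \[ \|R_{\mathcal S}(\lambda)\|\le \frac{\|C_{\mathcal S\mathcal S'}\|^2}{(1-\theta)\,(\lambda_{\min}(C)+\lambda)^3}. \]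
   Context: $\|\cdot\|$ denotes the spectral (operator $2$-) norm and $\lambda_{\min}(\cdot)$ the smallest eigenvalue of a symmetric matrix. $C_{\mathcal S}$, $C_{\mathcal S'}$ are the principal submatrices of $C$ on $\mathcal S$ and $\mathcal S'$, and $C_{\mathcal S\mathcal S'}$ is the submatrix with rows in $\mathcal S$ and columns in $\mathcal S'$. *)

(* Defs.v *)
From HB Require Import structures.
From mathcomp Require Import all_boot all_order all_algebra.
From mathcomp Require Import classical_sets reals.
Set Implicit Arguments. Unset Strict Implicit. Unset Printing Implicit Defensive.
Import Order.TTheory GRing.Theory Num.Theory.
Local Open Scope ring_scope.
Local Open Scope classical_set_scope.

Definition vnorm (R : realType) (n : nat) (x : 'cV[R]_n) : R :=
  Num.sqrt (\sum_(i < n) x i 0 ^+ 2).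

Definition opnorm (R : realType) (m n : nat) (A : 'M[R]_(m, n)) : R :=
  sup [set vnorm (A *m x) | x in [set x : 'cV[R]_n | vnorm x <= 1]].

Definition lambda_min (R : realType) (n : nat) (A : 'M[R]_n) : R :=
  inf [set a : R | eigenvalue A a].

(* submatrix with rows in S and columns in T (in the enumeration order of 'I_n) *)
Definition blk (R : realType) (n : nat) (S T : {set 'I_n}) (M : 'M[R]_n)
  : 'M[R]_(#|S|, #|T|) :=
  \matrix_(i < #|S|, j < #|T|) M (enum_val i) (enum_val j).

(* Main.v *)
Require Import Defs.
From HB Require Import structures.
From mathcomp Require Import all_boot all_order all_algebra.
From mathcomp Require Import classical_sets reals.
From mathcomp Require Import ring lra.
Set Implicit Arguments. Unset Strict Implicit. Unset Printing Implicit Defensive.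
Import Order.TTheory GRing.Theory Num.Theory.
Local Open Scope ring_scope.



Section Basic.
Variable R : realType.

Definition dot n (u v : 'cV[R]_n) : R := (u^T *m v) 0 0.
Definition nsq n (u : 'cV[R]_n) : R := dot u u.

Lemma dotE n (u v : 'cV[R]_n) : dot u v = \sum_i u i 0 * v i 0.
Proof. by rewrite /dot mxE; apply: eq_bigr => i _; rewrite mxE. Qed.

Lemma nsqE n (u : 'cV[R]_n) : nsq u = \sum_i u i 0 ^+ 2.
Proof. by rewrite /nsq dotE; apply: eq_bigr => i _; rewrite expr2. Qed.

Lemma nsq_ge0 n (u : 'cV[R]_n) : 0 <= nsq u.
Proof. by rewrite nsqE; apply: sumr_ge0 => i _; apply: sqr_ge0. Qed.

Lemma nsq_eq0 n (u : 'cV[R]_n) : nsq u = 0 -> u = 0.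
Proof.
rewrite nsqE => H; apply/matrixP => i j; rewrite (ord1 j) mxE.
have := psumr_eq0P (fun i _ => sqr_ge0 (u i 0)) H (i:=i) isT.
by move/eqP; rewrite sqrf_eq0 => /eqP.
Qed.

Lemma nsq_gt0 n (u : 'cV[R]_n) : u != 0 -> 0 < nsq u.
Proof.
move=> nz; rewrite lt_neqAle nsq_ge0 andbT eq_sym; apply/eqP => /nsq_eq0 h.
by rewrite h eqxx in nz.
Qed.

Lemma dotC n (u v : 'cV[R]_n) : dot u v = dot v u.
Proof. by rewrite !dotE; apply: eq_bigr => i _; rewrite mulrC. Qed.

Lemma dotDr n (u v w : 'cV[R]_n) : dot u (v + w) = dot u v + dot u w.
Proof. by rewrite /dot mulmxDr mxE. Qed.

Lemma dotZr n a (u v : 'cV[R]_n) : dot u (a *: v) = a * dot u v.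
Proof. by rewrite /dot -scalemxAr mxE. Qed.

Lemma dotDl n (u v w : 'cV[R]_n) : dot (v + w) u = dot v u + dot w u.
Proof. by rewrite dotC dotDr !(dotC u). Qed.

Lemma dotZl n a (u v : 'cV[R]_n) : dot (a *: v) u = a * dot v u.
Proof. by rewrite dotC dotZr dotC. Qed.

Lemma dotNl n (u v : 'cV[R]_n) : dot (- v) u = - dot v u.
Proof. by rewrite -scaleN1r dotZl mulN1r. Qed.

Lemma dotNr n (u v : 'cV[R]_n) : dot u (- v) = - dot u v.
Proof. by rewrite -scaleN1r dotZr mulN1r. Qed.

Lemma nsqN n (u : 'cV[R]_n) : nsq (- u) = nsq u.
Proof. by rewrite /nsq dotNl dotNr opprK. Qed.

Lemma dot_mul m n (M : 'M[R]_(m, n)) u v : dot u (M *m v) = dot (M^T *m u) v.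
Proof. by rewrite /dot trmx_mul trmxK mulmxA. Qed.

Lemma dot0r n (u : 'cV[R]_n) : dot u 0 = 0.
Proof. by rewrite /dot mulmx0 mxE. Qed.

Lemma quad (a b c : R) : 0 <= c -> (forall t, 0 <= a + 2 * t * b + t ^+ 2 * c) ->
  b ^+ 2 <= a * c.
Proof.
move=> c0 H.
have a0 : 0 <= a by have := H 0; rewrite !(mul0r, mulr0, expr0n, addr0).
have [ce|cpos] := eqVneq c 0.
  rewrite ce in H *.
  have [->|bnz] := eqVneq b 0; first by rewrite expr0n mulr0.
  have := H (- (a + 1) / (2 * b)).
  have -> : 2 * (- (a + 1) / (2 * b)) * b = - (a+1).
    by field; rewrite ?bnz ?pnatr_eq0 ?mulf_neq0 ?andbT.
  rewrite mulr0 addr0; lra.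
have cp : 0 < c by rewrite lt_neqAle eq_sym cpos c0.
set u := b / c.
have uc : u * c = b by rewrite /u mulfVK.
have := H (- u).
have -> : a + 2 * - u * b + (- u) ^+ 2 * c = a - u * b.
  by rewrite -uc; ring.
move=> h; rewrite -uc.
have : 0 <= c * (a - u * b) by apply: mulr_ge0 => //; lra.
rewrite -uc; nra.
Qed.

Lemma psd_cs n (K : 'M[R]_n) (x y : 'cV[R]_n) : K^T = K ->
  (forall z, 0 <= dot z (K *m z)) ->
  dot y (K *m x) ^+ 2 <= dot x (K *m x) * dot y (K *m y).
Proof.
move=> sK psd; apply: quad; first exact: psd.
move=> t; have := psd (x + t *: y).
have e : dot x (K *m y) = dot y (K *m x) by rewrite dot_mul sK dotC.
rewrite mulmxDr -scalemxAr dotDl !dotDr !dotZl !dotZr e.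
move=> h; apply: (le_trans h); rewrite le_eqVlt; apply/orP; left; apply/eqP; ring.
Qed.

Lemma cs n (x y : 'cV[R]_n) : dot x y ^+ 2 <= nsq x * nsq y.
Proof.
have := @psd_cs n 1%:M y x (trmx1 _ _).
rewrite !mul1mx mulrC => h; apply: h => z; rewrite mul1mx; exact: nsq_ge0.
Qed.

Definition frob m n (M : 'M[R]_(m, n)) := \sum_i \sum_j M i j ^+ 2.

Lemma frob_bound m n (M : 'M[R]_(m, n)) v : nsq (M *m v) <= frob M * nsq v.
Proof.
rewrite nsqE /frob mulr_suml; apply: ler_sum => i _.
have -> : (M *m v) i 0 = dot (row i M)^T v.
  by rewrite dotE mxE; apply: eq_bigr => j _; rewrite !mxE.
have -> : \sum_j M i j ^+ 2 = nsq (row i M)^T.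
  by rewrite nsqE; apply: eq_bigr => j _; rewrite !mxE.
exact: cs.
Qed.

Lemma frob_ge0 m n (M : 'M[R]_(m, n)) : 0 <= frob M.
Proof. by apply: sumr_ge0 => i _; apply: sumr_ge0 => j _; apply: sqr_ge0. Qed.

End Basic.



Section S2.
Variable R : realType.

Lemma nsqZ n a (u : 'cV[R]_n) : nsq (a *: u) = a ^+ 2 * nsq u.
Proof. by rewrite /nsq dotZl dotZr mulrA expr2. Qed.

Lemma normalize n (x : 'cV[R]_n) : x != 0 -> nsq ((Num.sqrt (nsq x))^-1 *: x) = 1.
Proof.
move=> nz; have p := nsq_gt0 nz.
rewrite nsqZ exprVn sqr_sqrtr ?ltW // mulVf //; by rewrite gt_eqF.
Qed.

Lemma unit_pd n (K : 'M[R]_n) : K^T = K -> (forall z, z != 0 -> 0 < dot z (K *m z)) ->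
  K \in unitmx.
Proof.
move=> sK pd; rewrite unitmxE unitfE; apply/negP => /det0P [v nz vK].
have z0 : v^T != 0 by rewrite trmx_eq0.
have := pd _ z0.
have -> : K *m v^T = 0 by rewrite -sK -trmx_mul vK trmx0.
by rewrite dot0r ltxx.
Qed.

Lemma min_eig n (M : 'M[R]_n) (x0 : 'cV[R]_n) : M^T = M -> x0 != 0 ->
  exists e, eigenvalue M e /\ forall x, e * nsq x <= dot x (M *m x).
Proof.
move=> sM nz0.
pose Q := [set dot x (M *m x) | x in [set x : 'cV[R]_n | nsq x = 1]]%classic.
have Qne : (Q !=set0)%classic.
  by exists (dot ((Num.sqrt (nsq x0))^-1 *: x0) (M *m ((Num.sqrt (nsq x0))^-1 *: x0))),
     ((Num.sqrt (nsq x0))^-1 *: x0) => //; rewrite /= normalize.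
have Qlb : has_lbound Q.
  exists (- (frob M + 1)) => q [x /= x1 <-].
  have h1 := cs x (M *m x); have h2 := frob_bound M x.
  rewrite x1 mul1r in h1; rewrite x1 mulr1 in h2.
  have := frob_ge0 M; nra.
set m := inf Q.
have mlb : forall x, m * nsq x <= dot x (M *m x).
  move=> x; have [->|nz] := eqVneq x 0; first by rewrite mulmx0 dot0r /nsq dot0r mulr0.
  set s := Num.sqrt (nsq x).
  have sp : 0 < s by rewrite sqrtr_gt0 nsq_gt0.
  have : m <= dot (s^-1 *: x) (M *m (s^-1 *: x)).
    by apply: (ge_inf Qlb); exists (s^-1 *: x) => //=; rewrite normalize.
  rewrite -scalemxAr dotZl dotZr mulrA -expr2 => h.
  have -> : nsq x = s ^+ 2 by rewrite sqr_sqrtr // nsq_ge0.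
  have s2 : 0 < s ^+ 2 by rewrite exprn_gt0.
  have e : dot x (M *m x) = (s^-1 ^+ 2 * dot x (M *m x)) * s ^+ 2.
    by rewrite mulrC mulrA exprVn mulfV ?mul1r // gt_eqF.
  rewrite e; move: h; set w := _ * dot _ _; nra.
exists m; split => //.
case: (boolP (eigenvalue M m)) => // neig; exfalso.
pose K := M - m%:M.
have sK : K^T = K by rewrite /K linearB /= sM tr_scalar_mx.
have Kx : forall x, dot x (K *m x) = dot x (M *m x) - m * nsq x.
  by move=> x; rewrite /K mulmxBl mul_scalar_mx dotDr dotNr dotZr.
have psd : forall z, 0 <= dot z (K *m z) by move=> z; rewrite Kx subr_ge0.
have Ku : K \in unitmx.
  rewrite unitmxE unitfE; apply/negP => /det0P [v vnz vK].
  move/negP: neig; apply; apply/eigenvalueP; exists v => //.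
  by move: vK; rewrite /K mulmxBr mul_mx_scalar => /eqP; rewrite subr_eq0 => /eqP.
set F := frob K + 1.
set G := frob (invmx K) + 1.
have Fp : 0 < F by rewrite /F; have := frob_ge0 K; lra.
have Gp : 0 < G by rewrite /G; have := frob_ge0 (invmx K); lra.
set c0 := (G ^+ 2 * F)^-1.
have c0p : 0 < c0 by rewrite invr_gt0 mulr_gt0 // exprn_gt0.
set eps := Num.min 1 c0.
have epsp : 0 < eps by rewrite lt_min ltr01 c0p.
have key : forall x, nsq x = 1 -> m + eps <= dot x (M *m x).
  move=> x x1.
  set t := dot x (K *m x).
  have t0 : 0 <= t := psd x.
  set y := K *m x.
  have h1 := psd_cs x y sK psd.
  rewrite -/t in h1.
  have e1 : dot y (K *m x) = nsq y by [].
  rewrite e1 in h1.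
  have h2 := cs y (K *m y).
  have h3 := frob_bound K y.
  have h4 : nsq x <= G * nsq y.
    have -> : x = invmx K *m y by rewrite /y mulKmx.
    have := frob_bound (invmx K) y; have := nsq_ge0 y; rewrite /G; nra.
  rewrite x1 in h4.
  have h3' : nsq (K *m y) <= F * nsq y by have := nsq_ge0 y; rewrite /F; nra.
  have ny : 0 <= nsq y := nsq_ge0 y.
  have cy : 0 <= dot y (K *m y) := psd y.
  have h5 : nsq y ^+ 2 <= t ^+ 2 * F.
    have ypos : 0 < nsq y by nra.
    have : nsq y ^+ 4 <= t ^+ 2 * (F * nsq y ^+ 2).
      have hc : dot y (K *m y) ^+ 2 <= F * nsq y ^+ 2 by nra.
      move: h1 hc ny cy t0; set nn := nsq y; set cc := dot y _ => h1 hc ny cy t0.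
      have hA : nn ^+ 4 <= (t * cc) ^+ 2.
        have -> : nn ^+ 4 = (nn ^+ 2) ^+ 2 by rewrite -exprM.
        by rewrite ler_pXn2r // ?nnegrE ?exprn_ge0 ?mulr_ge0.
      apply: (le_trans hA); rewrite exprMn; apply: ler_wpM2l => //; exact: exprn_ge0.
    move=> h; have n2 : 0 < nsq y ^+ 2 by rewrite exprn_gt0.
    rewrite -(ler_pM2r n2) -expr2 -exprM -mulrA; exact: h.
  have h6 : 1 <= G ^+ 2 * F * t ^+ 2 by nra.
  have h7 : c0 <= t ^+ 2.
    rewrite /c0 -(ler_pM2l (mulr_gt0 (exprn_gt0 2 Gp) Fp)) mulfV ?gt_eqF ?mulr_gt0 ?exprn_gt0 //.
  have : eps <= t.
    have [t1|t1] := leP 1 t; first by apply: le_trans t1; rewrite ge_min lexx.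
    have ec : eps <= c0 by rewrite /eps ge_min lexx orbT.
    nra.
  by rewrite /t Kx x1 mulr1; lra.
have : m + eps <= m.
  apply: lb_le_inf => // q [x /= x1 <-]; exact: key.
lra.
Qed.

End S2.



Section S3.
Variable R : realType.

Lemma eig_pos n (K : 'M[R]_n) a : K^T = K -> (forall z, z != 0 -> 0 < dot z (K *m z)) ->
  eigenvalue K a -> 0 < a.
Proof.
move=> sK pd /eigenvalueP [v vK nz].
have z0 : v^T != 0 by rewrite trmx_eq0.
have := pd _ z0.
have -> : K *m v^T = a *: v^T by rewrite -sK -trmx_mul vK linearZ.
rewrite dotZr; have := nsq_gt0 z0; rewrite /nsq; nra.
Qed.

Lemma lmin_ge0 n (K : 'M[R]_n) (x0 : 'cV[R]_n) : K^T = K -> x0 != 0 ->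
  (forall z, z != 0 -> 0 < dot z (K *m z)) -> 0 <= lambda_min K.
Proof.
move=> sK nz pd; have [e [ee _]] := min_eig (x0:=x0) sK nz.
apply: lb_le_inf; first by exists e.
by move=> a /= ea; apply/ltW; exact: eig_pos ea.
Qed.

Lemma rayleigh n (K : 'M[R]_n) (x0 : 'cV[R]_n) : K^T = K -> x0 != 0 ->
  (forall z, z != 0 -> 0 < dot z (K *m z)) ->
  forall x, lambda_min K * nsq x <= dot x (K *m x).
Proof.
move=> sK nz pd x; have [e [ee he]] := min_eig (x0:=x0) sK nz.
apply: le_trans (he x); apply: ler_wpM2r; first exact: nsq_ge0.
apply: (ge_inf _ ee); exists 0 => a /= ea; apply/ltW; exact: eig_pos ea.
Qed.

Lemma inv_bound n (K : 'M[R]_n) k : K^T = K -> 0 < k ->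
  (forall z, k * nsq z <= dot z (K *m z)) ->
  K \in unitmx /\ forall y, k ^+ 2 * nsq (invmx K *m y) <= nsq y.
Proof.
move=> sK kp hk.
have Ku : K \in unitmx.
  apply: unit_pd => // z nz; apply: lt_le_trans (hk z); rewrite mulr_gt0 //; exact: nsq_gt0.
split => // y; set z := invmx K *m y.
have Kz : K *m z = y by rewrite /z mulKVmx.
have h1 := hk z; rewrite Kz in h1.
have h2 := cs z y.
have nz0 := nsq_ge0 z; have ny0 := nsq_ge0 y.
have [zp|z0] := ltP 0 (nsq z); last first.
  have -> : nsq z = 0 by apply/eqP; rewrite eq_le z0 nz0.
  by rewrite mulr0.
have : (k * nsq z) ^+ 2 <= nsq z * nsq y.
  have h3 : (k * nsq z) ^+ 2 <= dot z y ^+ 2.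
    rewrite ler_pXn2r // ?nnegrE ?mulr_ge0 ?ltW //.
    exact: lt_le_trans (mulr_gt0 kp zp) h1.
  exact: (le_trans h3 h2).
move=> h; rewrite -(ler_pM2r zp) -mulrA -expr2 -exprMn [nsq y * _]mulrC; exact: h.
Qed.

Lemma vnormE n (x : 'cV[R]_n) : vnorm x = Num.sqrt (nsq x).
Proof. by rewrite /vnorm nsqE. Qed.

Lemma opnorm_bound m n (B : 'M[R]_(m, n)) :
  0 <= opnorm B /\ forall y, nsq (B *m y) <= opnorm B ^+ 2 * nsq y.
Proof.
set Sset := [set vnorm (B *m x) | x in [set x : 'cV[R]_n | vnorm x <= 1]]%classic.
have hub : has_ubound Sset.
  exists (Num.sqrt (frob B)) => q [x /= x1 <-].
  rewrite vnormE ler_sqrt ?frob_ge0 //.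
  apply: le_trans (frob_bound B x) _.
  rewrite vnormE -sqrtr1 ler_sqrt // in x1.
  by rewrite ler_piMr ?frob_ge0.
have ub := ub_le_sup hub.
have op0 : 0 <= opnorm B.
  apply: ub; exists 0; rewrite /= ?vnormE /nsq ?mulmx0 dot0r sqrtr0 //.
split => // y.
have [->|nz] := eqVneq y 0; first by rewrite mulmx0 /nsq !dot0r mulr0.
set s := Num.sqrt (nsq y).
have sp : 0 < s by rewrite sqrtr_gt0 nsq_gt0.
have : vnorm (B *m (s^-1 *: y)) <= opnorm B.
  apply: ub; exists (s^-1 *: y) => //=.
  by rewrite vnormE normalize // sqrtr1.
rewrite vnormE -scalemxAr nsqZ => h.
have : s^-1 ^+ 2 * nsq (B *m y) <= opnorm B ^+ 2.
  have hs : 0 <= s^-1 ^+ 2 * nsq (B *m y) by rewrite mulr_ge0 ?sqr_ge0 ?nsq_ge0.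
  rewrite -(sqr_sqrtr hs).
  by rewrite ler_pXn2r // nnegrE ?sqrtr_ge0.
have -> : nsq y = s ^+ 2 by rewrite sqr_sqrtr // nsq_ge0.
have s2 : 0 < s ^+ 2 by rewrite exprn_gt0.
have e : nsq (B *m y) = (s^-1 ^+ 2 * nsq (B *m y)) * s ^+ 2.
  by rewrite mulrC mulrA exprVn mulfV ?mul1r // gt_eqF.
move=> hw; rewrite [X in X <= _]e; by rewrite ler_pM2r.
Qed.

Lemma opnorm_le m n (B : 'M[R]_(m, n)) c : 0 <= c ->
  (forall x, nsq (B *m x) <= c ^+ 2 * nsq x) -> opnorm B <= c.
Proof.
move=> c0 h; apply: ge_sup.
  by exists (vnorm (B *m 0)), 0 => //=; rewrite vnormE /nsq dot0r sqrtr0.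
move=> q [x /= x1 <-].
rewrite vnormE -sqrtr1 ler_sqrt // in x1.
have -> : c = Num.sqrt (c ^+ 2) by rewrite sqrtr_sqr ger0_norm.
rewrite vnormE ler_sqrt ?sqr_ge0 //.
apply: le_trans (h x) _; rewrite ler_piMr ?exprn_ge0 //.
Qed.

Lemma tr_bound m n (B : 'M[R]_(m, n)) b :
  (forall y, nsq (B *m y) <= b * nsq y) -> 0 <= b ->
  forall y, nsq (B^T *m y) <= b * nsq y.
Proof.
move=> h b0 y; set z := B^T *m y.
have e : nsq z = dot (B *m z) y by rewrite /nsq {2}/z dot_mul trmxK.
have h2 := cs (B *m z) y.
have hz := h z.
have nz0 := nsq_ge0 z; have ny0 := nsq_ge0 y.
have [zp|z0] := ltP 0 (nsq z); last first.
  have -> : nsq z = 0 by apply/eqP; rewrite eq_le z0 nz0.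
  by rewrite mulr_ge0.
rewrite -e in h2.
have : nsq z ^+ 2 <= (b * nsq z) * nsq y.
  apply: le_trans h2 _; apply: ler_wpM2r => //.
rewrite expr2 (mulrC b) -mulrA => hh; rewrite -(ler_pM2l zp); exact: hh.
Qed.

End S3.



Section S4.
Variable R : realType.
Variable N : nat.

Definition emb (S : {set 'I_N}) : 'M[R]_(N, #|S|) :=
  \matrix_(i, j) (i == enum_val j)%:R.

Lemma mul_emb p (S : {set 'I_N}) (M : 'M[R]_(p, N)) :
  M *m emb S = \matrix_(k, j) M k (enum_val j).
Proof.
apply/matrixP => k j; rewrite !mxE (bigD1 (enum_val j)) //= !mxE eqxx mulr1.
rewrite big1 ?addr0 // => l /negbTE hl; by rewrite mxE hl mulr0.
Qed.

Lemma embT_mul p (S : {set 'I_N}) (M : 'M[R]_(N, p)) :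
  (emb S)^T *m M = \matrix_(i, l) M (enum_val i) l.
Proof.
apply/matrixP => i l; rewrite !mxE (bigD1 (enum_val i)) //= !mxE eqxx mul1r.
rewrite big1 ?addr0 // => k /negbTE hk; by rewrite !mxE hk mul0r.
Qed.

Lemma blk_emb (S T : {set 'I_N}) (M : 'M[R]_N) :
  blk S T M = (emb S)^T *m M *m emb T.
Proof. by rewrite mul_emb embT_mul; apply/matrixP => i j; rewrite !mxE. Qed.

Lemma embTemb (S : {set 'I_N}) : (emb S)^T *m emb S = 1%:M.
Proof.
rewrite mul_emb; apply/matrixP => i j; rewrite !mxE.
by rewrite (inj_eq enum_val_inj) eq_sym.
Qed.

Lemma emb_orth (S : {set 'I_N}) : (emb S)^T *m emb (~: S) = 0.
Proof.
rewrite mul_emb; apply/matrixP => i j; rewrite !mxE.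
have h1 := enum_valP i; have h2 := enum_valP j.
case: eqP => // e; move: h2; by rewrite finset.in_setC e h1.
Qed.

Lemma emb_sum1 (A : {set 'I_N}) k l :
  \sum_(j < #|A|) (k == enum_val j)%:R * (l == enum_val j)%:R
    = ((k == l) && (k \in A))%:R :> R.
Proof.
case kA: (k \in A); last first.
  rewrite andbF big1 // => j _.
  have : k != enum_val j by apply/eqP => e; move: (enum_valP j); rewrite -e kA.
  by move/negbTE => ->; rewrite mul0r.
rewrite (bigD1 (enum_rank_in kA k)) //= enum_rankK_in // eqxx mul1r andbT.
rewrite big1 ?addr0; first by rewrite eq_sym.
move=> j hj; case: eqP => e; last by rewrite mul0r.
by move: hj; rewrite {2}e enum_valK_in eqxx.
Qed.

Lemma emb_sum (S : {set 'I_N}) :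
  emb S *m (emb S)^T + emb (~: S) *m (emb (~: S))^T = 1%:M.
Proof.
have e : forall (A : {set 'I_N}) k l,
    (emb A *m (emb A)^T) k l = ((k == l) && (k \in A))%:R.
  by move=> A k l; rewrite mxE -emb_sum1; apply: eq_bigr => j _; rewrite !mxE.
apply/matrixP => k l; rewrite [LHS]mxE !e [RHS]mxE finset.in_setC.
by case: (k == l); case: (k \in S); rewrite /= ?addr0 ?add0r.
Qed.
End S4.



Section S5.
Variable R : realType.

Lemma nsq_iso N p (E : 'M[R]_(N, p)) z : E^T *m E = 1%:M -> nsq (E *m z) = nsq z.
Proof. by move=> h; rewrite /nsq dot_mul mulmxA h mul1mx. Qed.

Lemma dot_comp N p (E : 'M[R]_(N, p)) (K : 'M[R]_N) z :
  dot z ((E^T *m K *m E) *m z) = dot (E *m z) (K *m (E *m z)).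
Proof. by rewrite -!mulmxA dot_mul trmxK. Qed.

Lemma nsq_embT N (S : {set 'I_N}) (v : 'cV[R]_N) : nsq ((emb R S)^T *m v) <= nsq v.
Proof.
have e : nsq v = nsq ((emb R S)^T *m v) + nsq ((emb R (~: S))^T *m v).
  rewrite {1}/nsq -{2}(mul1mx v) -(emb_sum R S) mulmxDl dotDr -!mulmxA !dot_mul.
  by rewrite /nsq (dot_mul (emb R S)^T) (dot_mul (emb R (~: S))^T).
rewrite e lerDl; exact: nsq_ge0.
Qed.

Lemma delta_nz n (i : 'I_n) : (delta_mx i 0 : 'cV[R]_n) != 0.
Proof.
apply/eqP => /matrixP /(_ i 0); rewrite !mxE !eqxx /=; apply/eqP; exact: oner_neq0.
Qed.

Lemma blk_sym N (S : {set 'I_N}) (C : 'M[R]_N) : C^T = C -> (blk S S C)^T = blk S S C.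
Proof. by move=> sC; rewrite blk_emb !trmx_mul trmxK sC mulmxA. Qed.

Lemma blk_pd N (S : {set 'I_N}) (C : 'M[R]_N) :
  (forall z, z != 0 -> 0 < dot z (C *m z)) ->
  forall z, z != 0 -> 0 < dot z (blk S S C *m z).
Proof.
move=> pd z nz; rewrite blk_emb dot_comp; apply: pd.
apply/eqP => h; have := nsq_iso z (embTemb R S); rewrite h /nsq dot0r => /esym.
by move/nsq_eq0 => h'; rewrite h' eqxx in nz.
Qed.

End S5.



Theorem lemma1 (R : realType) (N : nat) (C : 'M[R]_N) (S : {set 'I_N}) :
  C^T = C ->
  (forall x : 'cV[R]_N, x != 0 -> 0 < (x^T *m C *m x) 0 0) ->
  S != finset.set0 -> ~: S != finset.set0 ->
  let theta := opnorm (blk S (~: S) C) ^+ 2 /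
               (lambda_min (blk S S C) * lambda_min (blk (~: S) (~: S) C)) in
  theta < 1 ->
  forall lam : R, 0 < lam ->
  opnorm (invmx (blk S S C + lam%:M) - blk S S (invmx (C + lam%:M)))
    <= opnorm (blk S (~: S) C) ^+ 2 / ((1 - theta) * (lambda_min C + lam) ^+ 3).
Proof.
move=> sC pd0 Sne Scne theta th1 lam lp.
have pd : forall z, z != 0 -> 0 < dot z (C *m z) by move=> z /pd0; rewrite /dot mulmxA.
have [k kS] : exists k, k \in S.
  by case/set0Pn: Sne => j hj; exists j.
have [k' kS'] : exists k, k \in ~: S.
  by case/set0Pn: Scne => j hj; exists j.
set E1 := emb R S. set E2 := emb R (~: S).
have x0 := delta_nz R k.
have x1 := delta_nz R (enum_rank_in kS k).
have x2 := delta_nz R (enum_rank_in kS' k').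
set mu := lambda_min C.
have mu0 : 0 <= mu := lmin_ge0 sC x0 pd.
have ray := rayleigh sC x0 pd.
set kap := mu + lam.
have kp : 0 < kap by rewrite /kap; lra.
set M := C + lam%:M.
have sM : M^T = M by rewrite /M linearD /= sC tr_scalar_mx.
have Mray : forall z, kap * nsq z <= dot z (M *m z).
  move=> z; rewrite /M mulmxDl mul_scalar_mx dotDr dotZr /kap mulrDl.
  by rewrite lerD2r; apply: ray.
have [Mu Mb] := inv_bound sM kp Mray.
set W := invmx M.
have e11 : E1^T *m E1 = 1%:M := embTemb R S.
have e22 : E2^T *m E2 = 1%:M := embTemb R (~: S).
have e12 : E1^T *m E2 = 0 := emb_orth R S.
have e21 : E2^T *m E1 = 0 by rewrite -(trmxK E1) -trmx_mul e12 trmx0.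
have esum : E1 *m E1^T + E2 *m E2^T = 1%:M := emb_sum R S.
set A := E1^T *m M *m E1.
set D := E2^T *m M *m E2.
have sA : A^T = A by rewrite /A !trmx_mul trmxK sM mulmxA.
have sD : D^T = D by rewrite /D !trmx_mul trmxK sM mulmxA.
have Aray : forall z, kap * nsq z <= dot z (A *m z).
  by move=> z; rewrite /A dot_comp -(nsq_iso z e11); apply: Mray.
have Dray : forall z, kap * nsq z <= dot z (D *m z).
  by move=> z; rewrite /D dot_comp -(nsq_iso z e22); apply: Mray.
have [Au Ab] := inv_bound sA kp Aray.
have [Du Db] := inv_bound sD kp Dray.
have eA : blk S S C + lam%:M = A.
  rewrite blk_emb /A /M mulmxDr mulmxDl mul_mx_scalar -scalemxAl e11.
  by rewrite scalemx1.
set B := blk S (~: S) C.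
have eB : B = E1^T *m M *m E2.
  by rewrite /B blk_emb /M mulmxDr mulmxDl mul_mx_scalar -scalemxAl e12 scaler0 addr0.
have eBT : B^T = E2^T *m M *m E1.
  rewrite /B blk_emb !trmx_mul trmxK sC mulmxA /M mulmxDr mulmxDl mul_mx_scalar.
  by rewrite -scalemxAl e21 scaler0 addr0.
set P := E1^T *m W *m E1.
have eP : blk S S (invmx (C + lam%:M)) = P by rewrite blk_emb.
set Q := E2^T *m W *m E1.
have MW : M *m W = 1%:M by rewrite /W mulmxV.
have X1 : A *m P + B *m Q = 1%:M.
  have : E1^T *m M *m (E1 *m E1^T + E2 *m E2^T) *m W *m E1 = 1%:M.
    by rewrite esum mulmx1 -(mulmxA _ M W) MW mulmx1 e11.
  by rewrite eB /A /P /Q mulmxDr !mulmxDl !mulmxA.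
have X2 : B^T *m P + D *m Q = 0.
  have : E2^T *m M *m (E1 *m E1^T + E2 *m E2^T) *m W *m E1 = 0.
    by rewrite esum mulmx1 -(mulmxA _ M W) MW mulmx1 e21.
  by rewrite eBT /D /P /Q mulmxDr !mulmxDl !mulmxA.
have eQ : Q = - (invmx D *m B^T *m P).
  have : D *m Q = - (B^T *m P) by apply: (addrI (B^T *m P)); rewrite X2 subrr.
  by move/(congr1 (mulmx (invmx D))); rewrite mulKmx // mulmxN mulmxA.
have eR : invmx A - P = - (invmx A *m B *m invmx D *m B^T *m P).
  have : invmx A - P = invmx A *m (1%:M - A *m P).
    by rewrite mulmxBr mulmx1 mulmxA mulVmx // mul1mx.
  move=> ->; have -> : 1%:M - A *m P = B *m Q by rewrite -X1 addrC addKr.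
  by rewrite eQ !mulmxN !mulmxA.
have [b0 Bb] := opnorm_bound B.
set b := opnorm B.
have BTb := tr_bound Bb (exprn_ge0 2 b0).
have div : forall u v : R, kap ^+ 2 * u <= v -> u <= kap^-2 * v.
  move=> u v h; have k2 : 0 < kap ^+ 2 by rewrite exprn_gt0.
  by rewrite -(ler_pM2l k2) mulrA mulfV ?gt_eqF // mul1r.
have Pb : forall x, nsq (P *m x) <= kap^-2 * nsq x.
  move=> x; apply: div; rewrite /P -!mulmxA.
  rewrite -(nsq_iso x e11); apply: (le_trans _ (Mb (E1 *m x))).
  by rewrite ler_pM2l ?exprn_gt0 // nsq_embT.
have c0 : 0 <= b ^+ 2 / kap ^+ 3 by apply: divr_ge0; apply: exprn_ge0 => //; apply: ltW.
have key : opnorm (invmx A - P) <= b ^+ 2 / kap ^+ 3.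
  apply: opnorm_le => // x.
  rewrite eR mulNmx nsqN.
  pose u1 := P *m x. pose u2 := B^T *m u1. pose u3 := invmx D *m u2.
  pose u4 := B *m u3. pose u5 := invmx A *m u4.
  have -> : (invmx A *m B *m invmx D *m B^T *m P) *m x = u5.
    by rewrite /u5 /u4 /u3 /u2 /u1 !mulmxA.
  have h5 : nsq u5 <= kap^-2 * nsq u4 by apply: div; apply: Ab.
  have h4 : nsq u4 <= b ^+ 2 * nsq u3 := Bb u3.
  have h3 : nsq u3 <= kap^-2 * nsq u2 by apply: div; apply: Db.
  have h2 : nsq u2 <= b ^+ 2 * nsq u1 := BTb u1.
  have h1 : nsq u1 <= kap^-2 * nsq x := Pb x.
  have ki : 0 <= kap^-2 by rewrite invr_ge0; apply: exprn_ge0; apply: ltW.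
  have b2 : 0 <= b ^+ 2 by rewrite exprn_ge0.
  apply: (le_trans h5); apply: (le_trans (ler_wpM2l ki h4)).
  apply: (le_trans (ler_wpM2l ki (ler_wpM2l b2 h3))).
  apply: (le_trans (ler_wpM2l ki (ler_wpM2l b2 (ler_wpM2l ki h2)))).
  apply: (le_trans (ler_wpM2l ki (ler_wpM2l b2 (ler_wpM2l ki (ler_wpM2l b2 h1))))).
  rewrite le_eqVlt; apply/orP; left; apply/eqP.
  by field; rewrite gt_eqF.
rewrite eA eP.
have l1 : 0 <= lambda_min (blk S S C) := lmin_ge0 (@blk_sym R N S C sC) x1 (@blk_pd R N S C pd).
have l2 : 0 <= lambda_min (blk (~: S) (~: S) C) :=
  lmin_ge0 (@blk_sym R N (~: S) C sC) x2 (@blk_pd R N (~: S) C pd).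
have th0 : 0 <= theta by rewrite /theta divr_ge0 ?exprn_ge0 ?mulr_ge0.
have om : 0 < 1 - theta by lra.
have k3 : 0 < kap ^+ 3 by rewrite exprn_gt0.
apply: (le_trans key).
have -> : b ^+ 2 / ((1 - theta) * kap ^+ 3) = (b ^+ 2 / kap ^+ 3) * (1 - theta)^-1.
  by field; rewrite ?gt_eqF // ; apply/andP; split; rewrite gt_eqF.
rewrite ler_peMr //.
by rewrite invf_ge1 //; lra.
Qed.
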